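(* Let $R_3,R_2,R_1$ be three runs that lie consecutively in $\{1,\dots,n\}$ in this left-to-right order, with no gaps between them. Let $p_3=P(R_3,R_2)$ and $p_2=P(R_2,R_1)$, and suppose $p_3>p_2$. Then $\mathrm{mid}(R_1)-\mathrm{mid}(R_3)\ge n/2^{p_3+1}$.
   Context: Assume $n=2^a-1$ for an integer $a\ge1$. Each index $j\in\{1,\dots,n\}$ has power $\mathrm{pow}(j)=a-1-\nu_2(j)$, where $\nu_2(j)$ is the exponent of $2$ in $j$. Equivalently, $\mathrm{pow}(j)$ is the depth of node $j$ in the perfect binary tree on $\{1,\dots,n\}$ in in-order, so the center has power $0$. A run is a nonempty set of consecutive indices $\{s,\dots,e\}$, and its midpoint is $\mathrm{mid}=(s+e)/2$. For a run $R$ and the run $R'$ immediately to its right, the power of $R$ (relative to $R'$) is $P(R,R')=\min\{\mathrm{pow}(j): j\in\mathbb{Z},\ \mathrm{mid}(R)\le j\le \mathrm{mid}(R')\}$. *)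

(* Defs.v *)
From mathcomp Require Import all_boot all_order all_algebra.
Set Implicit Arguments. Unset Strict Implicit. Unset Printing Implicit Defensive.
Import Order.TTheory GRing.Theory Num.Theory.

(* Power of index j when n = 2^a - 1:  pow(j) = a - 1 - nu_2(j).
   nu_2(j) is logn 2 j (exponent of 2 in j). *)
Definition pow (a j : nat) : nat := (a.-1 - logn 2 j)%N.

(* A run {s,...,e} is represented by its endpoints (s, e) with s <= e.
   Its midpoint (s+e)/2 as a rational. *)
Definition mid (s e : nat) : rat := ((s%:R + e%:R) / 2)%R.

(* P(R,R') = min { pow j : j integer, mid(R) <= j <= mid(R') },
   for R = {s..e}, R' = {s'..e'} inside {1..n}; all such j lie in {1..n}
   (indeed in {0..n} suffices), and the range is nonempty (contains e, e+1),
   so the default value a of the big min is never attained spuriously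
   (every pow value is <= a-1 < a). *)
Definition Ppow (a n s e s' e' : nat) : nat :=
  \big[minn/a]_(j < n.+1 | ((mid s e <= j%:R)%R && (j%:R <= mid s' e')%R)) pow a j.

(* Main.v *)
Require Import Defs.
From mathcomp Require Import all_boot all_order all_algebra.
From mathcomp Require Import zify ring lra.
Import Order.TTheory GRing.Theory Num.Theory.

Lemma bigmin_witness (m a : nat) (P : pred 'I_m) (F : 'I_m -> nat) :
  (\big[minn/a]_(i | P i) F i < a)%N -> exists2 i, P i & F i = \big[minn/a]_(i | P i) F i.
Proof.
apply: (big_ind (fun x => x < a -> exists2 i, P i & F i = x)%N).
- by rewrite ltnn.
- move=> x y Hx Hy; rewrite /minn; case: (ltnP x y) => _ h; [exact: Hx h | exact: Hy h].
- by move=> i Pi _; exists i.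
Qed.

Lemma bigmin_le (m a : nat) (P : pred 'I_m) (F : 'I_m -> nat) i :
  P i -> (\big[minn/a]_(j | P j) F j <= F i)%N.
Proof.
move=> Pi; rewrite unlock /reducebig.
elim: (index_enum _) (mem_index_enum i) => //= j r IH; rewrite inE.
case/orP => [/eqP<-|/IH h]; first by rewrite Pi geq_minl.
case: (P j) => //; exact: leq_trans (geq_minr _ _) h.
Qed.

Lemma mid_le s e j : (mid s e <= j%:R :> rat)%R = (s + e <= 2 * j)%N.
Proof.
by rewrite /mid ler_pdivrMr // -natrD -[2%R]/(2%:R)%R -natrM ler_nat mulnC.
Qed.

Lemma le_mid s e j : (j%:R <= mid s e :> rat)%R = (2 * j <= s + e)%N.
Proof.
by rewrite /mid ler_pdivlMr // -natrD -[2%R]/(2%:R)%R -natrM ler_nat mulnC.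
Qed.

Lemma logn_lt a n j : n = (2 ^ a - 1)%N -> (1 <= j)%N -> (j <= n)%N -> (logn 2 j < a)%N.
Proof.
move=> -> j1 jn; rewrite ltnNge -pfactor_dvdn //; apply/negP => /dvdn_leq.
have := expn_gt0 2 a; move=> h /(_ j1); lia.
Qed.

Theorem mainTheorem7 (a n s3 e3 e2 e1 : nat) :
  (1 <= a)%N -> n = (2 ^ a - 1)%N ->
  (1 <= s3)%N -> (s3 <= e3)%N -> (e3 < e2)%N -> (e2 < e1)%N -> (e1 <= n)%N ->
  (Ppow a n e3.+1 e2 e2.+1 e1 < Ppow a n s3 e3 e3.+1 e2)%N ->
  (n%:R / 2 ^+ (Ppow a n s3 e3 e3.+1 e2).+1 <= mid e2.+1 e1 - mid s3 e3 :> rat)%R.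
Proof.
move=> a1 hn s31 se3 ee32 ee21 e1n.
rewrite /Ppow; set p2 := \big[minn/a]_(j < n.+1 | _) _; set p3 := \big[minn/a]_(j < n.+1 | _) _.
move=> p23.
have e3n : (e3 < n.+1)%N by lia.
have p3a : (p3 < a)%N.
  have h : (p3 <= pow a e3)%N.
    rewrite /p3 -[e3]/(nat_of_ord (Ordinal e3n)).
    apply: bigmin_le.
    by rewrite /= mid_le le_mid; apply/andP; split; lia.
  move: h; rewrite /pow /=; lia.
have [j1 /andP [] + + pj1] := @bigmin_witness _ _ _ _ p3a.
rewrite mid_le le_mid => h1 h1'.
have [j0 /andP [] + + pj0] := @bigmin_witness _ _ _ _ (ltn_trans p23 p3a).
rewrite mid_le le_mid => h0 h0'.
rewrite -/p3 in pj1; rewrite -/p2 in pj0. clearbody p2 p3.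
have j1n := ltn_ord j1; have j0n := ltn_ord j0.
have v1 : (logn 2 j1 < a)%N by apply: (@logn_lt a n _ hn); lia.
have v0 : (logn 2 j0 < a)%N by apply: (@logn_lt a n _ hn); lia.
move: pj1 pj0; rewrite /pow => pj1 pj0.
set k := (a - p3)%N.
have j1pos : (0 < j1)%N by lia.
have j0pos : (0 < j0)%N by lia.
have d1 : (2 ^ k.-1 %| j1)%N by rewrite pfactor_dvdn //; lia.
have nd1 : ~~ (2 ^ k %| j1)%N by rewrite pfactor_dvdn //; lia.
have d0k : (2 ^ k %| j0)%N by rewrite pfactor_dvdn //; lia.
have d0 : (2 ^ k.-1 %| j0)%N.
  apply: dvdn_trans d0k; rewrite dvdn_Pexp2l //; lia.
have j10 : (j1 < j0)%N.
  rewrite ltn_neqAle; apply/andP; split; last first.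
    by rewrite -(leq_pmul2l (_ : 0 < 2)%N) //; exact: leq_trans h1' h0.
  by apply/eqP => e; move: nd1; rewrite e d0k.
have dd : (2 ^ k.-1 <= j0 - j1)%N.
  apply: dvdn_leq; first by rewrite subn_gt0.
  exact: dvdn_sub.
have kE : (2 ^ k = 2 * 2 ^ k.-1)%N.
  by rewrite -expnS prednK // subn_gt0.
have H : (s3 + e3 + 2 * 2 ^ k.-1 <= e2.+1 + e1)%N.
  move: dd h1 h0'; clear; set T := (2 ^ k.-1)%N; lia.
have E : (2 ^ k.-1 * 2 ^ p3.+1 = 2 ^ a)%N.
  by rewrite -expnD; congr (_ ^ _); move: p3a; clear; rewrite /k; lia.
have hn' : (n <= 2 ^ k.-1 * 2 ^ p3.+1)%N by rewrite E hn leq_subr.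
move: H hn'; set T := (2 ^ k.-1)%N => H hn'.
have Qpos : (0 < 2 ^+ p3.+1 :> rat)%R by apply: exprn_gt0.
rewrite ler_pdivrMr //.
have Hr : ((s3 + e3 + 2 * T)%:R <= (e2.+1 + e1)%:R :> rat)%R by rewrite ler_nat.
have hnr : (n%:R <= (T * 2 ^ p3.+1)%:R :> rat)%R by rewrite ler_nat.
rewrite !natrD in Hr; rewrite natrM natrX in hnr.
have Tpos : (0 <= T%:R :> rat)%R by [].
move: Qpos Hr hnr Tpos; rewrite /mid; set Q := (2 ^+ p3.+1)%R.
move=> *; nra.
Qed.
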